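(* Let $P,Q$ be probability measures with $P\ll Q$, let $\beta>1$, let $E$ be measurable with $q:=Q(E)\in(0,1)$, and set $\mathcal H_\beta:=\mathcal H_\beta(P\Vert Q)$ and $$u_0:=\min\Big\{1,\ \big((1+(\beta-1)\mathcal H_\beta)\,q^{\beta-1}\big)^{1/\beta}\Big\}.$$ Then $$P(E)\le\Big(q^{\beta-1}\big[1+(\beta-1)\mathcal H_\beta-(1-q)^{1-\beta}(1-u_0)^\beta\big]_+\Big)^{1/\beta}.$$
   Context: For $P\ll Q$ and $\beta>1$, $\mathcal H_\beta(P\Vert Q):=\int \frac{(\mathrm dP/\mathrm dQ)^\beta-1}{\beta-1}\,\mathrm dQ$ (the power divergence of order $\beta$). $[x]_+:=\max\{x,0\}$. *)

(* Defs.v *)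
From HB Require Import structures.
From mathcomp Require Import all_boot all_order all_algebra.
From mathcomp Require Import all_classical all_reals all_analysis.
Set Implicit Arguments. Unset Strict Implicit. Unset Printing Implicit Defensive.
Import Order.TTheory GRing.Theory Num.Theory.
Local Open Scope ring_scope.
Local Open Scope classical_set_scope.
Local Open Scope charge_scope.

(* Power divergence of order beta:
   H_beta(P||Q) = \int ((dP/dQ)^beta - 1)/(beta - 1) dQ,
   with dP/dQ the library's Radon-Nikodym derivative (an extended-real
   valued function, finite everywhere when P << Q; it is nonnegative
   Q-a.e., so the choice of powR on negative values is irrelevant). *)
Definition power_div d (T : measurableType d) (R : realType)
  (P Q : probability T R) (beta : R) : \bar R :=
  (\int[Q]_x
     ((((fine (('d (charge_of_finite_measure P) '/d Q) x)) `^ beta - 1)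
        / (beta - 1))%:E))%E.

Definition pos_part (R : realType) (x : R) : R := Num.max x 0.

(* Main.v *)
Require Import Defs.
From HB Require Import structures.
From mathcomp Require Import all_boot all_order all_algebra.
From mathcomp Require Import all_classical all_reals all_analysis.
From mathcomp Require Import measurable_realfun.
From mathcomp Require Import ring lra.
Import Order.TTheory GRing.Theory Num.Theory.
Local Open Scope ring_scope.
Local Open Scope classical_set_scope.

Lemma tangent (R : realType) (b a x : R) : 1 < b -> 0 <= a ->
  b * a `^ (b - 1) * x - (b - 1) * a `^ b <= x `^ b.
Proof.
move=> b1 a0.
have b0 : 0 < b by lra.
have b10 : 0 < b - 1 by rewrite subr_gt0.
have s0 := @powR_ge0 _ a (b - 1).
have A0 := @powR_ge0 _ a b.
have X0 := @powR_ge0 _ x b.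
have [x0|x0] := ltP x 0.
  have : b * a `^ (b - 1) * x <= 0.
    by apply: mulr_ge0_le0 => //; [apply: mulr_ge0; lra | lra].
  nra.
have c0 : 0 < b / (b - 1) by rewrite divr_gt0.
have := @conjugate_powR _ x (a `^ (b - 1)) b (b / (b - 1)) x0 s0 b0 c0.
rewrite -powRrM mulrCA divff ?mulr1; last by apply: lt0r_neq0.
rewrite invf_div.
have -> : b^-1 + (b - 1) / b = 1 by field; apply: lt0r_neq0.
move=> /(_ erefl) H.
move: H; rewrite -(ler_pM2l b0).
have -> : b * (x `^ b / b + a `^ b * ((b - 1) / b)) = x `^ b + (b - 1) * a `^ b.
  by field; apply: lt0r_neq0.
nra.
Qed.

Lemma powR_root (R : realType) (b x : R) : 0 < b -> 0 <= x -> (x `^ b) `^ (1 / b) = x.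
Proof.
move=> b0 x0; rewrite -powRrM mul1r divff ?powRr1 //; exact: lt0r_neq0.
Qed.

Lemma final_alg (R : realType) (b q p h : R) : 1 < b -> 0 < q < 1 -> 0 <= p <= 1 ->
  q * (p / q) `^ b + (1 - q) * ((1 - p) / (1 - q)) `^ b <= 1 + (b - 1) * h ->
  let u0 := Num.min 1 (((1 + (b - 1) * h) * q `^ (b - 1)) `^ (1 / b)) in
  p <= (q `^ (b - 1) *
            pos_part (1 + (b - 1) * h - (1 - q) `^ (1 - b) * (1 - u0) `^ b))
           `^ (1 / b).
Proof.
move=> b1 /andP[q0 q1] /andP[p0 p1] key; cbv zeta.
set u0 := Num.min 1 _.
have b0 : 0 < b by lra.
set K := 1 + (b - 1) * h in key u0 *.
set A := q * (p / q) `^ b in key.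
set B := (1 - q) * ((1 - p) / (1 - q)) `^ b in key.
have qs0 : 0 <= q `^ (b - 1) by exact: powR_ge0.
have eqA : p `^ b = q `^ (b - 1) * A.
  rewrite /A mulrA [q `^ _ * q]mulrC mulr_powRB1 ?(ltW q0) //.
  rewrite -powRM ?(ltW q0) ?divr_ge0 ?(ltW q0) //.
  by rewrite mulrC divfK //; exact: lt0r_neq0.
have q10 : 0 < 1 - q by lra.
have eqB : B = (1 - q) `^ (1 - b) * (1 - p) `^ b.
  rewrite /B powRM ?invr_ge0 ?(ltW q10) //; last by lra.
  rewrite -powR_inv1 ?(ltW q10) // -powRrM mulN1r mulrCA [RHS]mulrC; congr (_ * _).
  rewrite powRD ?powRr1 //; last by apply/implyP => _; apply: lt0r_neq0.
  exact: ltW.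
have A0 : 0 <= A by rewrite mulr_ge0 ?powR_ge0 ?(ltW q0).
have B0 : 0 <= B by rewrite eqB mulr_ge0 ?powR_ge0.
have pb0 : 0 <= p `^ b := powR_ge0 _ _.
have pbK : p `^ b <= K * q `^ (b - 1).
  rewrite eqA [K * _]mulrC ler_wpM2l //; lra.
have pu0 : p <= u0.
  rewrite le_min p1 /=.
  rewrite -{1}(@powR_root _ b p b0 p0).
  apply: ge0_ler_powR => //; first by rewrite divr_ge0 ?(ltW b0).
  by rewrite nnegrE (le_trans pb0 pbK).
have u01 : u0 <= 1 by rewrite ge_min lexx.
have C_le : (1 - q) `^ (1 - b) * (1 - u0) `^ b <= B.
  rewrite eqB ler_wpM2l ?powR_ge0 //.
  apply: ge0_ler_powR; rewrite ?nnegrE; lra.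
set C := (1 - q) `^ (1 - b) * (1 - u0) `^ b in C_le *.
have Hpos : K - C <= pos_part (K - C) by rewrite /pos_part le_max lexx.
rewrite -{1}(@powR_root _ b p b0 p0).
apply: ge0_ler_powR => //; first by rewrite divr_ge0 ?(ltW b0).
  by rewrite nnegrE mulr_ge0 // /pos_part le_max lexx orbT.
rewrite eqA ler_wpM2l //; lra.
Qed.

Lemma le_integral_meas d (T : measurableType d) (R : realType)
  (mu : {measure set T -> \bar R}) (D : set T) (f g : T -> \bar R) :
  measurable D -> measurable_fun D f -> measurable_fun D g ->
  {in D, forall x, (f x <= g x)%E} ->
  (\int[mu]_(x in D) f x <= \int[mu]_(x in D) g x)%E.
Proof.
move=> mD mf mg fg; rewrite integralE [leRHS]integralE leeB//.
- apply: ge0_le_integral => //.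
  + exact: measurable_funepos.
  + exact: measurable_funepos.
  + by move=> x /mem_set; exact: funepos_le.
- apply: ge0_le_integral => //.
  + exact: measurable_funeneg.
  + exact: measurable_funeneg.
  + by move=> x /mem_set; exact: funeneg_le.
Qed.

Lemma piece d (T : measurableType d) (R : realType) (Q : probability T R)
  (F : T -> R) (intF : Q.-integrable setT (EFin \o F)) (A : set T)
  (mA : measurable A) (a r s b : R) : 1 < b -> 0 <= a ->
  (\int[Q]_(x in A) (F x)%:E = r%:E)%E -> Q A = s%:E -> r = a * s ->
  (((a `^ b * s - s) / (b - 1))%:E <=
     \int[Q]_(x in A) (((F x) `^ b - 1) / (b - 1))%:E)%E.
Proof.
move=> b1 a0 Fr Qs ras.
have mF : measurable_fun setT F.
  by apply/measurable_EFinP; exact: (measurable_int _ intF).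
have intFA : Q.-integrable A (EFin \o F).
  exact: (integrableS measurableT mA _ intF).
set k1 := b * a `^ (b - 1) / (b - 1).
set k0 := (- ((b - 1) * a `^ b) - 1) / (b - 1).
have -> : (((a `^ b * s - s) / (b - 1))%:E =
     \int[Q]_(x in A) (k1%:E * (EFin \o F) x + (EFin \o cst k0) x))%E.
  rewrite integralD //; last first.
  - exact: finite_measure_integrable_cst.
  - exact: integrableZl.
  rewrite integralZl // Fr /comp.
  rewrite (_ : (fun x => (cst k0 x)%:E) = cst k0%:E) // integral_cst //.
  have -> : (k0%:E * Q A = k0%:E * s%:E)%E by congr (_ * _)%E; exact: Qs.
  rewrite -!EFinM -EFinD; congr EFin.
  rewrite /k1 /k0 ras.
  have e : a `^ (b - 1) * a = a `^ b.
    rewrite mulrC mulr_powRB1 //; lra.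
  rewrite -e.
  have b10 : b - 1 != 0 by apply: lt0r_neq0; lra.
  by field.
apply: le_integral_meas => //.
- apply: emeasurable_funD.
  + apply: emeasurable_funM => //.
    apply/measurable_EFinP; exact: (measurable_funS measurableT).
  + exact/measurable_EFinP.
- apply/measurable_EFinP; apply: measurable_funM => //.
  apply: measurable_funB => //.
  apply: (measurableT_comp (measurable_powR b)); exact: (measurable_funS measurableT).
move=> x _; rewrite /comp -EFinM -EFinD lee_fin /= /k1 /k0.
have b10 : 0 < b - 1 by lra.
rewrite (_ : _ + _ = (b * a `^ (b - 1) * F x - (b - 1) * a `^ b - 1) / (b - 1)); last first.
  by field; apply: lt0r_neq0.
rewrite ler_pM2r ?invr_gt0 //.
have := @tangent _ b a (F x) b1 a0; lra.
Qed.

Theorem mainTheorem3 (d : measure_display) (T : measurableType d) (R : realType)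
  (P Q : probability T R) (beta : R) (E : set T) (q : R) :
  P `<< Q -> 1 < beta -> measurable E -> Q E = q%:E -> 0 < q < 1 ->
  forall h : R, power_div P Q beta = h%:E ->
  let u0 := Num.min 1 (((1 + (beta - 1) * h) * q `^ (beta - 1)) `^ (1 / beta)) in
  (P E <= ((q `^ (beta - 1) *
            pos_part (1 + (beta - 1) * h - (1 - q) `^ (1 - beta) * (1 - u0) `^ beta))
           `^ (1 / beta))%:E)%E.
Proof.
move=> PQ b1 mE QE /andP[q0 q1] h hdef.
have PQ' : charge_of_finite_measure P `<< Q := PQ.
pose RN := Radon_Nikodym (charge_of_finite_measure P) Q.
pose F x := fine (RN x).
have hf x : RN x = (F x)%:E by rewrite /F fineK //; exact: Radon_Nikodym_fin_num.
have intF : Q.-integrable setT (EFin \o F).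
  have -> : EFin \o F = RN by apply/funext => x; rewrite /= hf.
  exact: Radon_Nikodym_integrable.
have PA A : measurable A -> P A = (\int[Q]_(x in A) (F x)%:E)%E.
  move=> mA; transitivity (charge_of_finite_measure P A) => //.
  rewrite (Radon_Nikodym_integral PQ' mA).
  by apply: eq_integral => x _; exact: hf.
have mF : measurable_fun setT F.
  by apply/measurable_EFinP; exact: (measurable_int _ intF).
have [p hpE] : exists p, P E = p%:E.
  exists (fine (P E)); rewrite fineK //; exact: fin_num_measure.
have p0 : 0 <= p by rewrite -lee_fin -hpE; exact: measure_ge0.
have p1 : p <= 1 by rewrite -lee_fin -hpE; exact: probability_le1.
have mC : measurable (~` E) by exact: measurableC.
have QC : Q (~` E) = (1 - q)%:E by rewrite probability_setC // QE.
have PC : P (~` E) = (1 - p)%:E by rewrite probability_setC // hpE.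
have b0 : 0 < beta by lra.
set a := p / q.
set c := (1 - p) / (1 - q).
have a0 : 0 <= a by rewrite divr_ge0 // ltW.
have c0 : 0 <= c by rewrite divr_ge0; lra.
have eP1 : (\int[Q]_(x in E) (F x)%:E)%E = p%:E by rewrite -PA.
have eP2 : (\int[Q]_(x in ~` E) (F x)%:E)%E = (1 - p)%:E by rewrite -PA.
have I1 := @piece _ _ _ Q F intF E mE a p q beta b1 a0 eP1 QE.
have I2 := @piece _ _ _ Q F intF (~` E) mC c (1 - p) (1 - q) beta b1 c0 eP2 QC.
have {I1}I1 := I1 (esym (divfK (lt0r_neq0 q0) p)).
have q10 : 0 < 1 - q by lra.
have {I2}I2 := I2 (esym (divfK (lt0r_neq0 q10) (1 - p))).
have mG : measurable_fun setT (fun x => (((F x) `^ beta - 1) / (beta - 1))%:E).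
  apply/measurable_EFinP; apply: measurable_funM => //.
  apply: measurable_funB => //.
  exact: (measurableT_comp (measurable_powR beta)).
move: hdef; rewrite /power_div -(setUv E) integral_setU //; last first.
- by rewrite /disj_set setICr.
- exact: (measurable_funS measurableT _ mG).
move=> hdef.
have key0 : ((a `^ beta * q - q) / (beta - 1) +
             (c `^ beta * (1 - q) - (1 - q)) / (beta - 1) <= h).
  rewrite -lee_fin -hdef EFinD; exact: leeD.
have key : q * a `^ beta + (1 - q) * c `^ beta <= 1 + (beta - 1) * h.
  have b10 : 0 < beta - 1 by lra.
  move: key0.
  rewrite (_ : _ + _ = (q * a `^ beta + (1 - q) * c `^ beta - 1) / (beta - 1)); last first.
    by field; apply: lt0r_neq0.
  rewrite ler_pdivrMr //; nra.
cbv zeta; rewrite hpE lee_fin.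
have qq : 0 < q < 1 by rewrite q0 q1.
have pp : 0 <= p <= 1 by rewrite p0 p1.
exact: (@final_alg R beta q p h b1 qq pp key).
Qed.
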